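(* Let $a,b,c,k$ be nonnegative integers with $a+b+c\le k$, and let $\overleftrightarrow{G}$ be a finite directed ordered graph such that the largest right oriented ordered matching contained in $\overleftrightarrow{G}$ as a subgraph has size at most $a$, the largest left oriented ordered matching contained in it has size at most $b$, and the largest directed ordered matching contained in it has size at most $c$. Then $\chi(\overleftrightarrow{G})\le 2(a+b+c)+1$.
   Context: A directed ordered graph is a finite ordered graph (undirected simple graph with a linear order on its vertices) in which each edge $\{u,v\}$ is replaced by either one arc ($(u,v)$ or $(v,u)$) or both arcs. The right oriented ordered matching $M^R_t$ has vertices $a_1<b_1<\dots<a_t<b_t$ and arcs $(a_i,b_i)$; the left oriented ordered matching $M^L_t$ has the same vertices and arcs $(b_i,a_i)$; the directed ordered matching $M^D_t$ has the same vertices and both arcs $(a_i,b_i),(b_i,a_i)$ for each $i$. A directed ordered graph contains one of these as a subgraph if there is an injective order-preserving map of its vertices into $\overleftrightarrow{G}$ sending arcs to arcs. $\chi(\overleftrightarrow{G})$ denotes the minimum $n$ such that there is a map $f$ from the vertices of $\overleftrightarrow{G}$ to those of $\overleftrightarrow{K}_n$ (the complete ordered graph on $n$ vertices with all edges oriented both ways) with $f(u)\le f(v)$ whenever $u\le v$ and $(f(u),f(v))$ an arc whenever $(u,v)$ is an arc. *)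

(* Defs.v *)
From mathcomp Require Import all_boot.
Set Implicit Arguments. Unset Strict Implicit. Unset Printing Implicit Defensive.

(* A finite directed ordered graph on vertices 0 < 1 < ... < n-1 ('I_n with the
   natural order).  The arc relation is loopless (the underlying graph is simple);
   each edge may carry one arc or both arcs, so any irreflexive relation is allowed. *)
Record dograph (n : nat) := DOGraph { darc : rel 'I_n; arc_irr : irreflexive darc }.

Definition contains (m n : nat) (H : rel 'I_m) (G : rel 'I_n) : Prop :=
  exists f : 'I_m -> 'I_n,
    (forall u v : 'I_m, (u < v)%N -> (f u < f v)%N) /\
    (forall u v : 'I_m, H u v -> G (f u) (f v)).

(* Matchings on vertices 0<1<...<2t-1, with a_i = 2i, b_i = 2i+1. *)
Definition MR (t : nat) : rel 'I_(2 * t) :=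
  fun u v => ~~ odd u && (v == u.+1 :> nat).
Definition ML (t : nat) : rel 'I_(2 * t) :=
  fun u v => ~~ odd v && (u == v.+1 :> nat).
Definition MD (t : nat) : rel 'I_(2 * t) :=
  fun u v => MR u v || ML u v.

(* f : 'I_n -> 'I_m is a homomorphism of G into the complete ordered graph K_m
   with all edges oriented both ways (arcs (i,j) for all i <> j). *)
Definition colb (n : nat) (G : dograph n) (m : nat) : bool :=
  [exists f : {ffun 'I_n -> 'I_m},
     [forall u : 'I_n, forall v : 'I_n,
        ((u <= v)%N ==> (f u <= f v)%N) && (darc G u v ==> (f u != f v))]].

Lemma colb_exists (n : nat) (G : dograph n) : exists m, colb G m.
Proof.
exists n; apply/existsP; exists [ffun u => u].
apply/forallP => u; apply/forallP => v; rewrite !ffunE.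
apply/andP; split; first by apply/implyP.
apply/implyP => Huv; apply/negP => /eqP E; subst v.
by rewrite (arc_irr G) in Huv.
Qed.

Definition chi (n : nat) (G : dograph n) : nat := ex_minn (colb_exists G).

(* Main.v *)
Require Import Defs.
From mathcomp Require Import all_boot.
From mathcomp Require Import zify.
From Stdlib Require Import Classical.
Set Implicit Arguments. Unset Strict Implicit.

Definition indep (E : rel nat) s t :=
  forall x y, s <= x -> x < t -> s <= y -> y < t -> ~~ E x y.

Definition matchF (E : rel nat) n p (h : nat -> nat) s :=
  [/\ (forall i j, i < j -> j < 2 * p -> h i < h j),
      (forall i, i < 2 * p -> s <= h i /\ h i < n) &
      (forall i, i < p -> E (h (2 * i)) (h (2 * i).+1))].

Definition matchB (E : rel nat) n p (h : nat -> nat) s :=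
  [/\ (forall i j, i < j -> j < 2 * p -> h i < h j),
      (forall i, i < 2 * p -> s <= h i /\ h i < n) &
      (forall i, i < p -> E (h (2 * i).+1) (h (2 * i)))].

Definition cons2 (x y : nat) (h : nat -> nat) : nat -> nat :=
  fun i => match i with 0 => x | 1 => y | j.+2 => h j end.

Lemma cons2_ord n p h s' x y :
  (forall i j, i < j -> j < 2 * p -> h i < h j) ->
  (forall i, i < 2 * p -> s' <= h i /\ h i < n) ->
  x < y -> y < s' ->
  forall i j, i < j -> j < 2 * p.+1 -> cons2 x y h i < cons2 x y h j.
Proof.
move=> Ho Hb Hxy Hys [|[|i]] [|[|j]] //= Hij Hj.
- have := Hb j; lia.
- have := Hb j; lia.
- apply: Ho; lia.
Qed.

Lemma cons2_bnd n p h s s' x y :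
  (forall i, i < 2 * p -> s' <= h i /\ h i < n) ->
  s <= x -> x < y -> y < n -> y < s' ->
  forall i, i < 2 * p.+1 -> s <= cons2 x y h i /\ cons2 x y h i < n.
Proof.
move=> Hb Hx Hxy Hyn Hys [|[|i]] /= Hi; try lia.
have := Hb i; lia.
Qed.

Lemma prepend E n s s' x y p q hF hB :
  matchF E n p hF s' -> matchB E n q hB s' -> s <= x -> x < y -> y < n -> y < s' ->
  (E x y || E y x) ->
  exists p2 q2 hF2 hB2,
    [/\ p2 + q2 = (p + q).+1, matchF E n p2 hF2 s & matchB E n q2 hB2 s].
Proof.
move=> [Fo Fb Fe] [Bo Bb Be] Hx Hxy Hyn Hys.
case Exy: (E x y) => /= He.
- exists p.+1, q, (cons2 x y hF), hB; split => //.
  + split; first exact: (cons2_ord Fo Fb Hxy Hys).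
    * exact: (cons2_bnd Fb Hx Hxy Hyn Hys).
    * case=> [|i] Hi; first by rewrite muln0 /=.
      have -> : 2 * i.+1 = (2 * i).+2 by lia.
      apply: Fe; lia.
  + split => // i Hi; have := Bb i Hi; lia.
- exists p, q.+1, hF, (cons2 x y hB); split => //.
  + by rewrite addnS.
  + split => // i Hi; have := Fb i Hi; lia.
  + split; first exact: (cons2_ord Bo Bb Hxy Hys).
    * exact: (cons2_bnd Bb Hx Hxy Hyn Hys).
    * case=> [|i] Hi; first by rewrite muln0 /=.
      have -> : 2 * i.+1 = (2 * i).+2 by lia.
      apply: Be; lia.
Qed.

Lemma step E n s (irr : forall x, E x x = false) : forall d t, n - t = d -> s <= t <= n -> indep E s t ->
  indep E s n \/ exists x t', [/\ s <= x, x < t', t' < n, indep E s t' & E x t' || E t' x].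
Proof.
elim => [|d IH] t Hd /andP[Hst Htn] Hi.
- have -> : n = t by lia. by left.
- have Htn' : t < n by lia.
  case: (classic (exists x, s <= x < t /\ (E x t || E t x))) => [[x [/andP[Hx1 Hx2] He]]|Hno].
  + right; exists x, t; split => //.
  + have Hn : forall z, s <= z -> z < t -> ~~ E z t && ~~ E t z.
      move=> z Hz1 Hz2; case Ezt: (E z t); case Etz: (E t z) => //; exfalso; apply: Hno;
      exists z; rewrite Ezt Etz; split => //; apply/andP; split => //.
    apply: (IH t.+1); [lia | apply/andP; split; lia |].
    move=> u v Hu1 Hu2 Hv1 Hv2.
    have [ut|ut] := ltnP u t; have [vt|vt] := ltnP v t.
    * exact: Hi.
    * have -> : v = t by lia. by case/andP: (Hn u Hu1 ut).
    * have -> : u = t by lia. by case/andP: (Hn v Hv1 vt).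
    * have -> : u = t by lia. have -> : v = t by lia.
      by rewrite irr.
Qed.

Lemma indep_nil E s : indep E s s.
Proof. move=> x y ? ? ? ?; lia. Qed.

Lemma greedy E n (irr : forall x, E x x = false) : forall d s, n - s <= d -> s <= n ->
  exists col p q hF hB,
  [/\ (forall x y, s <= x -> x <= y -> y < n -> col x <= col y),
      (forall x y, s <= x -> x < n -> s <= y -> y < n -> E x y -> col x != col y),
      (forall x, s <= x -> x < n -> col x <= 2 * (p + q)),
      matchF E n p hF s & matchB E n q hB s].
Proof.
have m0 : forall s h, matchF E n 0 h s /\ matchB E n 0 h s.
  by move=> s h; split; split => //= i j; lia.
elim => [|d IH] s Hd Hsn.
- exists (fun _ => 0), 0, 0, id, id; split => //; try lia; try apply m0.
- have Hss : s <= s <= n by apply/andP; split; lia.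
  case: (step irr (erefl (n - s)) Hss (@indep_nil E s)).
  + move=> Hi; exists (fun _ => 0), 0, 0, id, id; split => //; try apply m0.
    move=> x y Hx Hxn Hy Hyn; by move/negP: (Hi x y Hx Hxn Hy Hyn).
  move=> [x1 [t1 [Hx1 Hxt1 Ht1 Hi1 He1]]].
  have Htt : t1 <= t1 <= n by apply/andP; split; lia.
  have [Hi2|[x2 [t2 [Hx2 Hxt2 Ht2 Hi2 He2]]]] :=
    step irr (erefl (n - t1)) Htt (@indep_nil E t1).
  + have [F0 B0] := m0 t1.+1 id.
    have [p2 [q2 [hF2 [hB2 [Hpq HF HB]]]]] :=
      prepend F0 B0 Hx1 Hxt1 Ht1 (ltnSn t1) He1.
    exists (fun z => if z < t1 then 0 else 1), p2, q2, hF2, hB2; split => //.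
    * move=> x y Hx Hxy Hy; case: ifP; case: ifP => //; lia.
    * move=> x y Hx Hxn Hy Hyn Exy.
      case: ifP => Hxt; case: ifP => Hyt //.
      -- by move/negP: (Hi1 x y Hx Hxt Hy Hyt).
      -- have : ~~ E x y by apply: Hi2; lia.
         by rewrite Exy.
    * move=> x _ _; case: ifP; lia.
  + have Hd2 : n - t2 <= d by lia.
    have Ht2n : t2 <= n by lia.
    have [col [p [q [hF [hB [Cm Cp Cb MF MB]]]]]] := IH t2 Hd2 Ht2n.
    have Ht12 : t1 < t2 by lia.
    have [p2 [q2 [hF2 [hB2 [Hpq HF HB]]]]] := prepend MF MB Hx1 Hxt1 Ht1 Ht12 He1.
    exists (fun z => if z < t1 then 0 else if z < t2 then 1 else (col z).+2), p2, q2, hF2, hB2;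
      split => //.
    * move=> x y Hx Hxy Hy; do ! case: ifP => //; try lia.
      move=> ? ? ? ?; have := Cm x y; lia.
    * move=> x y Hx Hxn Hy Hyn Exy.
      have C1 : x < t1 -> y < t1 -> False.
        by move=> a b; move/negP: (Hi1 x y Hx a Hy b).
      have C2 : t1 <= x -> x < t2 -> t1 <= y -> y < t2 -> False.
        by move=> a b c e; have := Hi2 x y a b c e; rewrite Exy.
      have C3 : t2 <= x -> t2 <= y -> col x != col y.
        by move=> a b; apply: Cp.
      do ! case: ifP => ?; try done;
        try (exfalso; first [apply: C1 | apply: C2]; lia);
        rewrite eqSS; apply: C3; lia.
    * move=> x Hx Hxn; do ! case: ifP => //; try lia.
      move=> ? ?; have := Cb x; lia.
Qed.

Lemma emb_contains n' t (h : nat -> nat) (R : rel 'I_(2 * t)) (G : rel 'I_n'.+1) :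
  (forall i j, i < j -> j < 2 * t -> h i < h j) ->
  (forall i, i < 2 * t -> h i < n'.+1) ->
  (forall u v : 'I_(2 * t), R u v -> G (inord (h u)) (inord (h v))) ->
  contains R G.
Proof.
move=> Ho Hb HR; exists (fun u => inord (h u)); split => // u v Huv.
by rewrite !inordK ?Hb //; apply: Ho.
Qed.

Lemma even_ex u : ~~ odd u -> exists i, u = 2 * i.
Proof.
move=> Hu; exists u./2; have := odd_double_half u; rewrite (negbTE Hu) add0n -muln2.
lia.
Qed.

Theorem corollary2 (a b c k : nat) (n : nat) (G : dograph n) :
  (a + b + c <= k)%N ->
  (forall t : nat, contains (@MR t) (darc G) -> (t <= a)%N) ->
  (forall t : nat, contains (@ML t) (darc G) -> (t <= b)%N) ->
  (forall t : nat, contains (@MD t) (darc G) -> (t <= c)%N) ->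
  (chi G <= 2 * (a + b + c) + 1)%N.
Proof.
move=> _ HR HL _.
suff Hc : colb G (2 * (a + b + c) + 1).
  by rewrite /chi; case: ex_minnP => m _ Hmin; apply: Hmin.
case: n G HR HL => [|n'] G HR HL.
  apply/existsP; exists [ffun u : 'I_0 => match u with Ordinal _ H => False_rect _ (notF H) end].
  apply/forallP => -[u Hu]; by [].
pose E := fun x y : nat => darc G (inord x) (inord y).
have irr : forall x, E x x = false by move=> x; rewrite /E (arc_irr G).
have [col [p [q [hF [hB [Cm Cp Cb [Fo Fb Fe] [Bo Bb Be]]]]]]] :=
  greedy irr (leqnn (n'.+1 - 0)) (leq0n _).
have Hp : p <= a.
  apply: HR; apply: (emb_contains Fo) => [i Hi|u v]; first by case: (Fb i Hi).
  rewrite /MR => /andP[Hu /eqP Hv].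
  have [i Hi] := even_ex Hu.
  rewrite Hv Hi; apply: Fe; have := ltn_ord u; lia.
have Hq : q <= b.
  apply: HL; apply: (emb_contains Bo) => [i Hi|u v]; first by case: (Bb i Hi).
  rewrite /ML => /andP[Hv /eqP Hu].
  have [i Hi] := even_ex Hv.
  rewrite Hu Hi; apply: Be; have := ltn_ord v; lia.
rewrite addn1; apply/existsP.
exists [ffun u : 'I_n'.+1 => (inord (col u) : 'I_(2 * (a + b + c)).+1)].
have Hcb : forall u : 'I_n'.+1, col u < (2 * (a + b + c)).+1.
  move=> u; have := Cb u (leq0n _) (ltn_ord u); lia.
apply/forallP => u; apply/forallP => v; rewrite !ffunE.
apply/andP; split.
- apply/implyP => Huv; rewrite !inordK //; apply: Cm => //.
- apply/implyP => Huv; apply/negP => /eqP /(congr1 (@nat_of_ord _)); rewrite !inordK // => /eqP.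
  apply/negP; apply: Cp => //; rewrite /E !inord_val //.
Qed.
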